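(* Let $\operatorname{rk}L=2$ with basis $e_1,e_2$, dual basis $f_1,f_2$, $x_i=X^{f_i}$, $k=\omega(e_1,e_2)\ne0$, and let $m_1,m_2\ge0$. Then: (1) $\mathcal U(\{m_1\times e_2,\ m_2\times(-e_2)\})$ consists exactly of the Laurent polynomials $W=\sum_l c_l(x_1)x_2^l$, $c_l\in\mathcal Q[x_1^{\pm1}]$, such that $c_l$ is divisible by $(1+x_1^k)^{-m_1l}$ for $l\le0$ and by $(1+x_1^k)^{m_2l}$ for $l\ge0$; (2) $\mathcal U(\{m_1\times e_2,\ m_2\times(-e_2)\})=\mathcal Q\bigl[x_1^{\pm1},\ x_2(1+x_1^k)^{m_2},\ (1+x_1^k)^{m_1}/x_2\bigr]$.
   Context: For a lattice $L$ with skew-symmetric integral bilinear form $\omega$: $L^*=\mathrm{Hom}(L,\mathbb Z)$, $(\cdot,\cdot)$ the canonical pairing; $\mathcal Q=\mathbb Q(e^{2\pi i\mathbb Q})$ is $\mathbb Q$ with all roots of unity adjoined; $\mathcal Q[L^*]$ is the group algebra of $L^*$ with monomials $X^m$, and $\mathbb K_L$ its fraction field. For $v\in L$, $\mu_v^*$ is the $\mathcal Q$-algebra automorphism of $\mathbb K_L$ with $\mu_v^*(X^m)=X^m(1+X^{\omega(\cdot,v)})^{-(m,v)}$, where $\omega(\cdot,v)\in L^*$ is $w\mapsto\omega(w,v)$; e.g. $\mu_{e_2}^*(x_1,x_2)=(x_1,x_2/(1+x_1^k))$ and $\mu_{-e_2}^*(x_1,x_2)=(x_1,x_2(1+x_1^{-k}))$.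 An exchange collection is a finite tuple of vectors with multiplicity function $m_V$; $\{m_1\times u_1,m_2\times u_2\}$ denotes the collection with $u_j$ of multiplicity $m_j$. The upper bound is $\mathcal U(V)=\mathcal Q[L^*]\cap\bigcap_{v\in L}(\mu_v^* )^{m_V(v)}(\mathcal Q[L^*])\subset\mathbb K_L$. $\mathcal Q[g_1,\dots]$ denotes the $\mathcal Q$-subalgebra generated by the $g_i$. *)

(* Defs.v *)
From HB Require Import structures.
From mathcomp Require Import all_boot all_order all_algebra all_field.
From mathcomp Require Import fraction algC.
From mathcomp Require Import generic_quotient.
Set Implicit Arguments. Unset Strict Implicit. Unset Printing Implicit Defensive.
Import Order.TTheory GRing.Theory Num.Theory.
Local Open Scope ring_scope.

(* The base field Q = Q(e^{2 pi i Q}), realised inside algC as the smallest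
   subfield of algC containing all roots of unity. *)
Definition Qcyc (x : algC) : Prop :=
  forall S : algC -> Prop,
    S 0 -> S 1 ->
    (forall a b, S a -> S b -> S (a + b)) ->
    (forall a, S a -> S (- a)) ->
    (forall a b, S a -> S b -> S (a * b)) ->
    (forall a, S a -> S (a^-1)) ->
    (forall (n : nat) (z : algC), (0 < n)%N -> n.-unity_root z -> S z) ->
    S x.

(* Rank 2 lattice L = Z^2 with basis e1 = (1,0), e2 = (0,1); L^* = Z^2 with
   the dual basis f1, f2 and the standard pairing. *)
Definition lat := (int * int)%type.
Definition e1 : lat := (1, 0).
Definition e2 : lat := (0, 1).
Definition lneg (v : lat) : lat := (- v.1, - v.2).
Definition pairing (m v : lat) : int := m.1 * v.1 + m.2 * v.2.
Definition omega (k : int) (a b : lat) : int := k * (a.1 * b.2 - a.2 * b.1).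

(* Ambient field: fraction field of the polynomial ring in x1, x2
   ({poly {poly algC}}: outer variable x2, inner variable x1); it contains
   the fraction field K_L of Q[L^*]. *)
Definition K := {fraction {poly {poly algC}}}.
Definition tof (p : {poly {poly algC}}) : K := @FracField.tofrac _ p.
Definition cst (c : algC) : K := tof (c%:P%:P).
Definition x1 : K := tof (('X : {poly algC})%:P).
Definition x2 : K := tof 'X.
Definition mono (m : lat) : K := x1 ^ m.1 * x2 ^ m.2.

Definition laurent (f : K) : Prop :=
  exists s : seq (algC * lat),
    (forall t, t \in s -> Qcyc t.1) /\ f = \sum_(t <- s) cst t.1 * mono t.2.

Definition laurent1 (f : K) : Prop :=
  exists s : seq (algC * int),
    (forall t, t \in s -> Qcyc t.1) /\ f = \sum_(t <- s) cst t.1 * x1 ^ t.2.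

Definition evalK (y1 y2 : K) (p : {poly {poly algC}}) : K :=
  (map_poly (fun q : {poly algC} => (map_poly cst q).[y1]) p).[y2].

(* mu_v^*: the field automorphism with
   X^m |-> X^m (1 + X^{omega(.,v)})^{-(m,v)}, i.e. determined by
   x_i = X^{f_i} |-> x_i (1 + X^{omega(.,v)})^{-(f_i,v)} *)
Definition mu (k : int) (v : lat) (f : K) : K :=
  let w : lat := (omega k e1 v, omega k e2 v) in
  let y1 := x1 * (1 + mono w) ^ (- pairing (1, 0) v) in
  let y2 := x2 * (1 + mono w) ^ (- pairing (0, 1) v) in
  evalK y1 y2 (\n_(repr f)) / evalK y1 y2 (\d_(repr f)).

(* upper bound of an exchange collection given by its multiplicity function *)
Definition upper_bound (k : int) (mV : lat -> nat) (f : K) : Prop :=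
  laurent f /\
  forall v : lat, exists g, laurent g /\ f = iter (mV v) (mu k v) g.

Definition mult_of (V : seq lat) (v : lat) : nat := count (pred1 v) V.

Definition Qsubalg_gen (gs : seq K) (f : K) : Prop :=
  forall S : K -> Prop,
    (forall c, Qcyc c -> S (cst c)) ->
    (forall g, g \in gs -> S g) ->
    (forall a b, S a -> S b -> S (a + b)) ->
    (forall a b, S a -> S b -> S (a * b)) ->
    S f.

(* Main.v *)
Require Import Defs.
From HB Require Import structures.
From mathcomp Require Import all_boot all_order all_algebra all_field.
From mathcomp Require Import fraction algC.
From mathcomp Require Import generic_quotient.
From mathcomp Require Import zify.
Import Order.TTheory GRing.Theory Num.Theory.
Local Open Scope ring_scope.
Local Open Scope quotient_scope.

Lemma fracE (f : K) : f = tof (\n_(repr f)) / tof (\d_(repr f)).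
Proof.
have hd : \d_(repr f) != 0 by apply: denom_ratioP.
apply: (mulIf (x := tof (\d_(repr f)))); first by rewrite /tof tofrac_eq0.
rewrite mulfVK; last by rewrite /tof tofrac_eq0.
rewrite -{1}[f]reprK /tof.
set x := repr f.
unlock FracField.tofrac.
rewrite [X in X = _](_ : _ = FracField.mul (\pi_K x) (\pi_K (Ratio (\d_x) 1)))//.
rewrite -FracField.pi_mul.
apply/eqmodP; rewrite /= FracField.equivfE /FracField.mulf.
rewrite !numden_Ratio ?mulf_neq0 ?oner_neq0 //.
by rewrite !mulr1 [\d_x * _]mulrC.
Qed.

Local Notation PP := {poly {poly algC}}.

Lemma tofD (p q : PP) : tof (p + q) = tof p + tof q. Proof. exact: rmorphD. Qed.
Lemma tofM (p q : PP) : tof (p * q) = tof p * tof q. Proof. exact: rmorphM. Qed.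
Lemma tofB (p q : PP) : tof (p - q) = tof p - tof q. Proof. exact: rmorphB. Qed.
Lemma tofN (p : PP) : tof (- p) = - tof p. Proof. exact: rmorphN. Qed.
Lemma tof1 : tof 1 = 1. Proof. exact: rmorph1. Qed.
Lemma tof0 : tof 0 = 0. Proof. exact: rmorph0. Qed.
Lemma tofX (p : PP) n : tof (p ^+ n) = tof p ^+ n. Proof. exact: rmorphXn. Qed.
Lemma tof_sum I (r : seq I) (P : pred I) (F : I -> PP) :
  tof (\sum_(i <- r | P i) F i) = \sum_(i <- r | P i) tof (F i).
Proof. exact: rmorph_sum. Qed.
Lemma tof_eq0 (p : PP) : (tof p == 0) = (p == 0).
Proof. exact: tofrac_eq0. Qed.
Lemma tof_inj (p q : PP) : tof p = tof q -> p = q.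
Proof. by move=> /eqP; rewrite /tof tofrac_eq => /eqP. Qed.

Lemma x2_neq0 : x2 != 0.
Proof. by rewrite /x2 tof_eq0 polyX_eq0. Qed.
Lemma x1_neq0 : x1 != 0.
Proof. by rewrite /x1 tof_eq0 polyC_eq0 polyX_eq0. Qed.

Definition isC (f : K) :=
  exists p q : {poly algC}, q != 0 /\ f = tof p%:P / tof q%:P.

Lemma tofC_neq0 {q : {poly algC}} : q != 0 -> tof q%:P != 0.
Proof. by rewrite tof_eq0 polyC_eq0. Qed.

Lemma isC_tof p : isC (tof p%:P).
Proof. by exists p, 1; rewrite oner_neq0 tof1 divr1. Qed.

Lemma isCD a b : isC a -> isC b -> isC (a + b).
Proof.
move=> [p [q [hq ->]]] [p' [q' [hq' ->]]].
exists (p * q' + p' * q), (q * q'); split; first by rewrite mulf_neq0.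
rewrite !polyCD !polyCM tofD !tofM.
by rewrite addf_div ?tofC_neq0.
Qed.

Lemma isCM a b : isC a -> isC b -> isC (a * b).
Proof.
move=> [p [q [hq ->]]] [p' [q' [hq' ->]]].
exists (p * p'), (q * q'); split; first by rewrite mulf_neq0.
by rewrite !polyCM !tofM mulf_div.
Qed.

Lemma isCN a : isC a -> isC (- a).
Proof.
move=> [p [q [hq ->]]]; exists (- p), q; split => //.
by rewrite polyCN tofN mulNr.
Qed.

Lemma isCV a : isC a -> isC (a^-1).
Proof.
move=> [p [q [hq ->]]].
have [->|hp] := eqVneq p 0.
  by exists 0, 1; rewrite oner_neq0 polyC0 tof0 !mul0r invr0.
by exists q, p; rewrite hp invfM invrK mulrC.
Qed.

Lemma isC1 : isC 1. Proof. by rewrite -tof1 -polyC1; apply: isC_tof. Qed.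
Lemma isC0 : isC 0. Proof. by rewrite -tof0 -polyC0; apply: isC_tof. Qed.

Lemma isCXn a n : isC a -> isC (a ^+ n).
Proof.
move=> ha; elim: n => [|n ih]; first by rewrite expr0; apply: isC1.
by rewrite exprS; apply: isCM.
Qed.

Lemma isCXz a (z : int) : isC a -> isC (a ^ z).
Proof.
move=> ha; case: z => n; first by apply: isCXn.
by rewrite NegzE -exprnN; apply/isCV/isCXn.
Qed.

Lemma isC_cst c : isC (cst c). Proof. exact: isC_tof. Qed.
Lemma isC_x1 : isC x1. Proof. exact: isC_tof. Qed.
Lemma common_den {n : nat} {a : nat -> K} : (forall i, (i < n)%N -> isC (a i)) ->
  exists D : {poly algC}, D != 0 /\ exists s : nat -> {poly algC},
    forall i, (i < n)%N -> a i = tof (s i)%:P / tof D%:P.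
Proof.
elim: n => [|n ih] ha.
  by exists 1; split; [exact: oner_neq0 | exists (fun _ => 0)].
have [D [hD [s hs]]] : exists D : {poly algC}, D != 0 /\ exists s : nat -> {poly algC},
    forall i, (i < n)%N -> a i = tof (s i)%:P / tof D%:P.
  by apply: ih => i hi; apply: ha; apply: ltnW.
have [p [q [hq hn]]] := ha n (ltnSn n).
exists (D * q); split; first by rewrite mulf_neq0.
exists (fun i => if (i < n)%N then s i * q else p * D) => i; rewrite ltnS leq_eqVlt.
case/orP => [/eqP ->|hi]; first rewrite ltnn.
  by rewrite hn !polyCM !tofM [tof D%:P * _]mulrC -mulf_div divff ?tofC_neq0 // mulr1.
by rewrite hi hs // !polyCM !tofM -mulf_div divff ?tofC_neq0 // mulr1.
Qed.

Lemma tof_poly n (E : nat -> {poly algC}) :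
  tof (\poly_(i < n) E i : PP) = \sum_(i < n) tof (E i)%:P * x2 ^+ i.
Proof.
rewrite poly_def tof_sum; apply: eq_bigr => i _.
by rewrite -mul_polyC tofM tofX.
Qed.

Lemma indepX n (a : nat -> K) : (forall i, (i < n)%N -> isC (a i)) ->
  \sum_(i < n) a i * x2 ^+ i = 0 -> forall i, (i < n)%N -> a i = 0.
Proof.
move=> ha; have [D [hD [s hs]]] := common_den ha.
have -> : \sum_(i < n) a i * x2 ^+ i = (tof D%:P)^-1 * tof (\poly_(i < n) s i : PP).
  rewrite tof_poly mulr_sumr; apply: eq_bigr => i _.
  by rewrite hs // [RHS]mulrA [(_^-1) * _]mulrC.
move/eqP; rewrite mulf_eq0 invr_eq0 (negbTE (tofC_neq0 hD)) /= tof_eq0 => /eqP h0 i hi.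
have := congr1 (fun p : PP => p`_i) h0; rewrite coef_poly hi coef0 => hsi.
by rewrite hs // hsi polyC0 tof0 mul0r.
Qed.
Definition xs (N : nat) (c : int -> K) : K :=
  \sum_(i < (2 * N).+1) c (i%:Z - N%:Z) * x2 ^ (i%:Z - N%:Z).

Lemma xs_ext {N c c'} : (forall l, c l = c' l) -> xs N c = xs N c'.
Proof. by move=> h; apply: eq_bigr => i _; rewrite h. Qed.

Lemma xs_add N c c' : xs N (fun l => c l + c' l) = xs N c + xs N c'.
Proof. by rewrite /xs -big_split; apply: eq_bigr => i _; rewrite mulrDl. Qed.

Lemma xs_zero N : xs N (fun _ => 0) = 0.
Proof. by rewrite /xs big1 // => i _; rewrite mul0r. Qed.

Lemma xs_sub N c c' : xs N (fun l => c l - c' l) = xs N c - xs N c'.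
Proof.
rewrite /xs -sumrB; apply: eq_bigr => i _; by rewrite mulrBl.
Qed.

Lemma xs_single N (b : int) (a : K) : (absz b <= N)%N ->
  xs N (fun l => if l == b then a else 0) = a * x2 ^ b.
Proof.
move=> hb.
have hi0 : (absz (b + N%:Z)%R < (2 * N).+1)%N by lia.
have e0 : (absz (b + N%:Z)%R)%:Z = b + N%:Z by lia.
rewrite /xs (bigD1 (Ordinal hi0)) //= big1 ?addr0.
  by rewrite e0 addrK eqxx.
move=> i hi.
case: eqP => [h|]; last by rewrite mul0r.
case/eqP: hi; apply: val_inj => /=; lia.
Qed.

Lemma regroup (s : seq (algC * lat)) (psi : algC * lat -> K) N :
  (forall t, t \in s -> (absz t.2.2 <= N)%N) ->
  \sum_(t <- s) psi t * x2 ^ t.2.2 =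
  xs N (fun l => \sum_(t <- s | t.2.2 == l) psi t).
Proof.
elim: s => [|t s ih] hs.
  by rewrite big_nil (xs_ext (c' := fun _ => 0)) ?xs_zero // => l; rewrite big_nil.
rewrite big_cons ih; last by move=> u hu; apply: hs; rewrite inE hu orbT.
rewrite [RHS](xs_ext (c' := fun l => (if l == t.2.2 then psi t else 0) +
                                 \sum_(t0 <- s | t0.2.2 == l) psi t0)).
  by rewrite xs_add xs_single //; apply: hs; rewrite inE eqxx.
move=> l; rewrite big_cons; case: eqP => [->|hne]; first by rewrite eqxx.
case: eqP => [h|]; first by case: hne.
by rewrite add0r.
Qed.

Lemma coef_out (s : seq (algC * lat)) (psi : algC * lat -> K) N (l : int) :
  (forall t, t \in s -> (absz t.2.2 <= N)%N) -> (N < absz l)%N ->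
  \sum_(t <- s | t.2.2 == l) psi t = 0.
Proof.
move=> hs hl; rewrite big1_seq // => t /andP [/eqP ht /hs]; rewrite ht; lia.
Qed.

Lemma xs_uniq N c c' : (forall l, isC (c l)) -> (forall l, isC (c' l)) ->
  xs N c = xs N c' -> forall l : int, (absz l <= N)%N -> c l = c' l.
Proof.
move=> hc hc' /eqP; rewrite -subr_eq0 -xs_sub => /eqP h0 l hl.
set a := fun i : nat => c (i%:Z - N%:Z) - c' (i%:Z - N%:Z).
have hsum : \sum_(i < (2 * N).+1) a i * x2 ^+ i = x2 ^+ N * xs N (fun l => c l - c' l).
  rewrite /xs mulr_sumr; apply: eq_bigr => i _.
  rewrite /a mulrC [RHS]mulrCA [RHS]mulrC; congr (_ * _).
  rewrite -[x2 ^+ N]/(x2 ^ (N%:Z)) -expfzDr ?x2_neq0 //.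
  by rewrite addrC subrK.
rewrite h0 mulr0 in hsum.
have := @indepX ((2 * N).+1) a _ hsum (absz (l + N%:Z)%R) _.
have e0 : (absz (l + N%:Z)%R)%:Z = l + N%:Z by lia.
rewrite /a e0 addrK => h; apply/eqP; rewrite -subr_eq0; apply/eqP; apply: h.
  by move=> i _; apply: isCD => //; apply: isCN.
lia.
Qed.
Definition emb (q : {poly algC}) : K := tof q%:P.

Lemma emb_zmod : zmod_morphism emb.
Proof. by move=> a b; rewrite /emb polyCB tofB. Qed.
Lemma emb_monoid : monoid_morphism emb.
Proof. by split; [rewrite /emb polyC1 tof1 | move=> a b; rewrite /emb polyCM tofM]. Qed.
HB.instance Definition _ := GRing.isZmodMorphism.Build _ _ emb emb_zmod.
HB.instance Definition _ := GRing.isMonoidMorphism.Build _ _ emb emb_monoid.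

Definition ev2 (y : K) (p : PP) : K := (map_poly emb p).[y].

Lemma ev2D y p q : ev2 y (p + q) = ev2 y p + ev2 y q.
Proof. by rewrite /ev2 rmorphD hornerD. Qed.
Lemma ev2M y p q : ev2 y (p * q) = ev2 y p * ev2 y q.
Proof. by rewrite /ev2 rmorphM hornerM. Qed.
Lemma ev2C y q : ev2 y q%:P = emb q.
Proof. by rewrite /ev2 map_polyC hornerC. Qed.
Lemma ev2X y : ev2 y 'X = y.
Proof. by rewrite /ev2 map_polyX hornerX. Qed.
Lemma ev2_1 y : ev2 y 1 = 1.
Proof. by rewrite -polyC1 ev2C rmorph1. Qed.

Lemma ev2_x2 p : ev2 x2 p = tof p.
Proof.
elim/poly_ind: p => [|p c ih]; first by rewrite /ev2 rmorph0 horner0 tof0.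
by rewrite ev2D ev2M ih ev2X ev2C tofD tofM.
Qed.

Lemma ev2E y p : ev2 y p = \sum_(i < size p) emb p`_i * y ^+ i.
Proof. by rewrite /ev2 /map_poly horner_poly. Qed.

Lemma cst_emb c : cst c = emb c%:P. Proof. by []. Qed.

Lemma evalK_x1 y p : evalK x1 y p = ev2 y p.
Proof.
rewrite /evalK /ev2; congr (_.[y]); apply: eq_map_poly => q.
rewrite /map_poly horner_poly.
have -> : emb q = emb (\sum_(i < size q) q`_i *: 'X^i) by rewrite -poly_def coefK.
rewrite /emb rmorph_sum tof_sum; apply: eq_bigr => i _.
by rewrite -mul_polyC rmorphM rmorphXn tofM tofX.
Qed.

Lemma ev2_inj r p : isC r -> r != 0 -> ev2 (x2 * r) p = 0 -> p = 0.
Proof.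
move=> hr hr0 h.
have : \sum_(i < size p) (emb p`_i * r ^+ i) * x2 ^+ i = 0.
  rewrite -[X in _ = X]h ev2E; apply: eq_bigr => i _.
  by rewrite exprMn -mulrA [x2 ^+ i * _]mulrC.
move/(@indepX (size p) (fun i => emb p`_i * r ^+ i) (fun j _ => isCM _ _ (isC_tof _) (isCXn _ _ hr))) => hz.
apply/polyP => i; rewrite coef0.
case: (ltnP i (size p)) => hi; last by rewrite nth_default.
have /eqP := hz i hi.
rewrite mulf_eq0 expf_eq0 (negbTE hr0) andbF orbF /emb tof_eq0 polyC_eq0.
by move/eqP.
Qed.
Definition Phi (r : K) (f : K) : K :=
  ev2 (x2 * r) (\n_(repr f)) / ev2 (x2 * r) (\d_(repr f)).

Section PhiTheory.
Variable r : K.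
Hypothesis hr : isC r.
Hypothesis hr0 : r != 0.

Local Notation ev := (ev2 (x2 * r)).

Lemma ev_neq0 p : p != 0 -> ev p != 0.
Proof. by apply: contra => /eqP /(ev2_inj _ _ hr hr0) ->. Qed.

Lemma tof_neq0 (p : PP) : p != 0 -> tof p != 0.
Proof. by rewrite tof_eq0. Qed.

Lemma Phi_frac n d : d != 0 -> Phi r (tof n / tof d) = ev n / ev d.
Proof.
move=> hd; rewrite /Phi.
set f := tof n / tof d.
have hd' : \d_(repr f) != 0 by apply: denom_ratioP.
have := fracE f; rewrite {1}/f => /eqP.
rewrite eqr_div ?tof_neq0 // -!tofM => /eqP /tof_inj he.
apply/eqP; rewrite eqr_div ?ev_neq0 //; apply/eqP.
by rewrite -!ev2M he.
Qed.

Lemma Phi_tof p : Phi r (tof p) = ev p.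
Proof.
by rewrite -[tof p]divr1 -tof1 Phi_frac ?oner_neq0 // ev2_1 divr1.
Qed.

Lemma Phi0 : Phi r 0 = 0.
Proof. by rewrite -tof0 Phi_tof /ev2 rmorph0 horner0. Qed.

Lemma Phi1 : Phi r 1 = 1.
Proof. by rewrite -tof1 Phi_tof ev2_1. Qed.

Lemma PhiD f g : Phi r (f + g) = Phi r f + Phi r g.
Proof.
rewrite (fracE f) (fracE g).
set a := \n_(repr f); set b := \d_(repr f); set c := \n_(repr g); set d := \d_(repr g).
have hb : b != 0 by apply: denom_ratioP.
have hd : d != 0 by apply: denom_ratioP.
rewrite addf_div ?tof_neq0 // -!tofM -tofD Phi_frac ?mulf_neq0 //.
by rewrite !Phi_frac ?mulf_neq0 // addf_div ?ev_neq0 // ev2D !ev2M.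
Qed.

Lemma PhiM f g : Phi r (f * g) = Phi r f * Phi r g.
Proof.
rewrite (fracE f) (fracE g).
set a := \n_(repr f); set b := \d_(repr f); set c := \n_(repr g); set d := \d_(repr g).
have hb : b != 0 by apply: denom_ratioP.
have hd : d != 0 by apply: denom_ratioP.
rewrite mulf_div -!tofM Phi_frac ?mulf_neq0 //.
by rewrite !Phi_frac ?mulf_neq0 // mulf_div !ev2M.
Qed.

Lemma PhiN f : Phi r (- f) = - Phi r f.
Proof.
apply/eqP; rewrite -subr_eq0 opprK -PhiD addNr; apply/eqP; exact: Phi0.
Qed.

Lemma PhiV f : Phi r (f^-1) = (Phi r f)^-1.
Proof.
rewrite (fracE f).
set a := \n_(repr f); set b := \d_(repr f).
have hb : b != 0 by apply: denom_ratioP.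
have [->|ha] := eqVneq a 0.
  by rewrite tof0 mul0r invr0 Phi0 invr0.
by rewrite invf_div !Phi_frac // invf_div.
Qed.

Lemma PhiXn f n : Phi r (f ^+ n) = Phi r f ^+ n.
Proof.
elim: n => [|n ih]; first by rewrite !expr0 Phi1.
by rewrite !exprS PhiM ih.
Qed.

Lemma PhiXz f (z : int) : Phi r (f ^ z) = Phi r f ^ z.
Proof.
case: z => n; first by apply: PhiXn.
by rewrite !NegzE -!exprnN PhiV PhiXn.
Qed.

Lemma Phi_sum I (s : seq I) (P : pred I) (F : I -> K) :
  Phi r (\sum_(i <- s | P i) F i) = \sum_(i <- s | P i) Phi r (F i).
Proof. exact: (big_morph _ PhiD Phi0). Qed.

Lemma Phi_isC a : isC a -> Phi r a = a.
Proof.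
move=> [p [q [hq ->]]]; rewrite Phi_frac; last by rewrite polyC_eq0.
by rewrite !ev2C.
Qed.

Lemma Phi_x2 : Phi r x2 = x2 * r.
Proof. by rewrite /x2 Phi_tof ev2X. Qed.

Lemma iterD m f g : iter m (Phi r) (f + g) = iter m (Phi r) f + iter m (Phi r) g.
Proof. by elim: m => //= m ->; rewrite PhiD. Qed.
Lemma iterM m f g : iter m (Phi r) (f * g) = iter m (Phi r) f * iter m (Phi r) g.
Proof. by elim: m => //= m ->; rewrite PhiM. Qed.
Lemma iter0 m : iter m (Phi r) 0 = 0.
Proof. by elim: m => //= m ->; rewrite Phi0. Qed.
Lemma iter_sum m I (s : seq I) (P : pred I) (F : I -> K) :
  iter m (Phi r) (\sum_(i <- s | P i) F i) = \sum_(i <- s | P i) iter m (Phi r) (F i).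
Proof. exact: (big_morph _ (iterD m) (iter0 m)). Qed.
Lemma iter_isC m a : isC a -> iter m (Phi r) a = a.
Proof. by move=> ha; elim: m => //= m ->; rewrite Phi_isC. Qed.
Lemma iter_x2z m (b : int) : iter m (Phi r) (x2 ^ b) = x2 ^ b * r ^ (m%:Z * b).
Proof.
elim: m => [|m ih] /=; first by rewrite mul0r expr0z mulr1.
rewrite ih PhiM PhiXz Phi_x2 PhiXz Phi_isC // expfzMl -mulrA -expfzDr //.
by congr (_ * r ^ _); lia.
Qed.

End PhiTheory.
Lemma mono_k0 (k : int) : mono (k, 0) = x1 ^ k.
Proof. by rewrite /mono /= expr0z mulr1. Qed.

Lemma mu_e2 k f : mu k e2 f = Phi ((1 + x1 ^ k)^-1) f.
Proof.
have h1 : omega k e1 e2 = k by rewrite /omega /e1 /e2 /=; lia.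
have h2 : omega k e2 e2 = 0 by rewrite /omega /e2 /=; lia.
have h3 : pairing (1, 0) e2 = 0 by rewrite /pairing /e2 /=; lia.
have h4 : pairing (0, 1) e2 = 1 by rewrite /pairing /e2 /=; lia.
rewrite /mu /Phi /= h1 h2 h3 h4 mono_k0 oppr0 expr0z mulr1 !evalK_x1.
by rewrite exprN1.
Qed.

Lemma mu_ne2 k f : mu k (lneg e2) f = Phi (1 + x1 ^ (- k)) f.
Proof.
have h1 : omega k e1 (lneg e2) = - k by rewrite /omega /e1 /e2 /lneg /=; lia.
have h2 : omega k e2 (lneg e2) = 0 by rewrite /omega /e2 /lneg /=; lia.
have h3 : pairing (1, 0) (lneg e2) = 0 by rewrite /pairing /e2 /lneg /=; lia.
have h4 : pairing (0, 1) (lneg e2) = -1 by rewrite /pairing /e2 /lneg /=; lia.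
rewrite /mu /Phi /= h1 h2 h3 h4 mono_k0 oppr0 expr0z mulr1 !evalK_x1.
by rewrite opprK expr1z.
Qed.
Lemma Qcyc0 : Qcyc 0. Proof. by move=> S h0. Qed.
Lemma Qcyc1 : Qcyc 1. Proof. by move=> S h0 h1. Qed.
Lemma QcycD a b : Qcyc a -> Qcyc b -> Qcyc (a + b).
Proof. move=> ha hb S h0 h1 hD hN hM hV hU; exact: hD (ha S h0 h1 hD hN hM hV hU) (hb S h0 h1 hD hN hM hV hU). Qed.
Lemma QcycM a b : Qcyc a -> Qcyc b -> Qcyc (a * b).
Proof. move=> ha hb S h0 h1 hD hN hM hV hU; exact: hM (ha S h0 h1 hD hN hM hV hU) (hb S h0 h1 hD hN hM hV hU). Qed.

Lemma cstM a b : cst (a * b) = cst a * cst b.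
Proof. by rewrite !cst_emb polyCM rmorphM. Qed.
Lemma cst1 : cst 1 = 1. Proof. by rewrite cst_emb polyC1 rmorph1. Qed.
Lemma cst0 : cst 0 = 0. Proof. by rewrite cst_emb polyC0 rmorph0. Qed.

Lemma XnaddC_neq0 n : (0 < n)%N -> 1 + x1 ^+ n != 0.
Proof.
move=> hn.
have -> : 1 + x1 ^+ n = tof ('X^n + 1%:P)%:P.
  by rewrite polyCD polyC1 tofD tof1 addrC /x1 -tofX -rmorphXn.
by rewrite tof_eq0 polyC_eq0 monic_neq0 // monicXnaddC.
Qed.

Lemma u_neq0 (k : int) : k != 0 -> 1 + x1 ^ k != 0.
Proof.
case: k => n hk.
  by apply: XnaddC_neq0; rewrite lt0n; apply: contra hk => /eqP ->.
rewrite NegzE -exprnN.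
have hy : x1 ^+ n.+1 != 0 by rewrite expf_neq0 // x1_neq0.
apply: contra (XnaddC_neq0 _ (ltn0Sn n)) => /eqP h.
have := congr1 (fun z => z * x1 ^+ n.+1) h.
by rewrite /= mul0r mulrDl mul1r mulVf // addrC => ->.
Qed.

Lemma isC_u (k : int) : isC (1 + x1 ^ k).
Proof. apply: isCD; [exact: isC1 | apply: isCXz; exact: isC_x1]. Qed.

Lemma laurent1_0 : laurent1 0.
Proof. by exists [::]; rewrite big_nil. Qed.

Lemma laurent1_term c a : Qcyc c -> laurent1 (cst c * x1 ^ a).
Proof.
by move=> hc; exists [:: (c, a)]; rewrite big_seq1; split => // t; rewrite inE => /eqP ->.
Qed.

Lemma laurent1D f g : laurent1 f -> laurent1 g -> laurent1 (f + g).
Proof.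
move=> [s [hs ->]] [s' [hs' ->]]; exists (s ++ s'); rewrite big_cat; split => // t.
by rewrite mem_cat => /orP [/hs|/hs'].
Qed.

Lemma laurent1_sum I (s : seq I) (P : pred I) (F : I -> K) :
  (forall i, P i -> laurent1 (F i)) -> laurent1 (\sum_(i <- s | P i) F i).
Proof.
move=> h; elim: s => [|i s ih]; first by rewrite big_nil; exact: laurent1_0.
rewrite big_cons; case: ifP => // hi; exact: laurent1D (h _ hi) ih.
Qed.

Lemma laurent1_termM c a g : Qcyc c -> laurent1 g -> laurent1 (cst c * x1 ^ a * g).
Proof.
move=> hc [s [hs ->]].
exists [seq (c * t.1, a + t.2) | t <- s]; split.
  by move=> t /mapP [t' /hs ht' ->] /=; apply: QcycM.
rewrite big_map mulr_sumr; apply: eq_bigr => t _ /=.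
rewrite cstM expfzDr ?x1_neq0 //.
by rewrite -!mulrA; congr (_ * _); rewrite mulrCA.
Qed.

Lemma laurent1M f g : laurent1 f -> laurent1 g -> laurent1 (f * g).
Proof.
move=> [s [hs ->]] hg; rewrite mulr_suml.
elim: s hs => [|t s ih] hs; first by rewrite big_nil; exact: laurent1_0.
rewrite big_cons; apply: laurent1D.
  by apply: laurent1_termM => //; apply: hs; rewrite inE eqxx.
by apply: ih => t' ht'; apply: hs; rewrite inE ht' orbT.
Qed.

Lemma laurent1_cst c : Qcyc c -> laurent1 (cst c).
Proof. by move=> hc; rewrite -[cst c]mulr1 -(expr0z x1); apply: laurent1_term. Qed.
Lemma laurent1_1 : laurent1 1.
Proof. by rewrite -cst1; apply: laurent1_cst; exact: Qcyc1. Qed.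
Lemma laurent1_x1z a : laurent1 (x1 ^ a).
Proof. by rewrite -[x1 ^ a]mul1r -cst1; apply: laurent1_term; exact: Qcyc1. Qed.
Lemma laurent1Xn f n : laurent1 f -> laurent1 (f ^+ n).
Proof.
move=> hf; elim: n => [|n ih]; first by rewrite expr0; exact: laurent1_1.
by rewrite exprS; apply: laurent1M.
Qed.

Lemma laurent1_isC f : laurent1 f -> isC f.
Proof.
move=> [s [_ ->]]; elim: s => [|t s ih]; first by rewrite big_nil; exact: isC0.
rewrite big_cons; apply: isCD => //; apply: isCM; [exact: isC_cst | apply: isCXz; exact: isC_x1].
Qed.

Lemma laurent1_u (k : int) : laurent1 (1 + x1 ^ k).
Proof. by apply: laurent1D; [exact: laurent1_1 | exact: laurent1_x1z]. Qed.

Lemma monoD a b : mono (a.1 + b.1, a.2 + b.2) = mono a * mono b.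
Proof.
rewrite /mono /= (expfzDr a.1 b.1 x1_neq0) (expfzDr a.2 b.2 x2_neq0).
by rewrite -!mulrA; congr (_ * _); rewrite mulrCA.
Qed.

Lemma laurent_0 : laurent 0.
Proof. by exists [::]; rewrite big_nil. Qed.

Lemma laurent_term c m : Qcyc c -> laurent (cst c * mono m).
Proof.
by move=> hc; exists [:: (c, m)]; rewrite big_seq1; split => // t; rewrite inE => /eqP ->.
Qed.

Lemma laurentD f g : laurent f -> laurent g -> laurent (f + g).
Proof.
move=> [s [hs ->]] [s' [hs' ->]]; exists (s ++ s'); rewrite big_cat; split => // t.
by rewrite mem_cat => /orP [/hs|/hs'].
Qed.

Lemma laurent_sum I (s : seq I) (P : pred I) (F : I -> K) :
  (forall i, P i -> laurent (F i)) -> laurent (\sum_(i <- s | P i) F i).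
Proof.
move=> h; elim: s => [|i s ih]; first by rewrite big_nil; exact: laurent_0.
rewrite big_cons; case: ifP => // hi; exact: laurentD (h _ hi) ih.
Qed.

Lemma laurent_termM c m g : Qcyc c -> laurent g -> laurent (cst c * mono m * g).
Proof.
move=> hc [s [hs ->]].
exists [seq (c * t.1, (m.1 + t.2.1, m.2 + t.2.2)) | t <- s]; split.
  by move=> t /mapP [t' /hs ht' ->] /=; apply: QcycM.
rewrite big_map mulr_sumr; apply: eq_bigr => t _ /=.
by rewrite cstM (monoD m t.2) mulrACA.
Qed.

Lemma laurentM f g : laurent f -> laurent g -> laurent (f * g).
Proof.
move=> [s [hs ->]] hg; rewrite mulr_suml.
elim: s hs => [|t s ih] hs; first by rewrite big_nil; exact: laurent_0.
rewrite big_cons; apply: laurentD.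
  by apply: laurent_termM => //; apply: hs; rewrite inE eqxx.
by apply: ih => t' ht'; apply: hs; rewrite inE ht' orbT.
Qed.

Lemma laurent_of1 f : laurent1 f -> laurent f.
Proof.
move=> [s [hs ->]]; exists [seq (t.1, (t.2, 0)) | t <- s]; split.
  by move=> t /mapP [t' /hs ht' ->].
rewrite big_map; apply: eq_bigr => t _ /=; by rewrite /mono /= expr0z mulr1.
Qed.

Lemma laurent_x2z b : laurent (x2 ^ b).
Proof.
have -> : x2 ^ b = cst 1 * mono (0, b) by rewrite cst1 mul1r /mono /= expr0z mul1r.
by apply: laurent_term; exact: Qcyc1.
Qed.
Lemma expz_cancel (x : K) (z : int) : x != 0 -> x ^ z * x ^ (- z) = 1.
Proof. by move=> hx; rewrite -expfzDr // subrr expr0z. Qed.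

Lemma laurent1_Xz f (z : int) : laurent1 f -> 0 <= z -> laurent1 (f ^ z).
Proof. by case: z => // n hf _; apply: laurent1Xn. Qed.

Lemma iter_xs m r N c : isC r -> r != 0 -> (forall l, isC (c l)) ->
  iter m (Phi r) (xs N c) = xs N (fun l => c l * r ^ (m%:Z * l)).
Proof.
move=> hr hr0 hc; rewrite /xs iter_sum //; apply: eq_bigr => i _.
rewrite iterM // iter_isC // iter_x2z //.
by rewrite mulrA mulrAC.
Qed.

Definition cf (s : seq (algC * lat)) (l : int) : K :=
  \sum_(t <- s | t.2.2 == l) cst t.1 * x1 ^ t.2.1.

Lemma laurent1_cf s l : (forall t, t \in s -> Qcyc t.1) -> laurent1 (cf s l).
Proof.
move=> hs; rewrite /cf big_seq_cond; apply: laurent1_sum => t /andP [ht _].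
by apply: laurent1_term; apply: hs.
Qed.

Lemma laurent_xs s N : (forall t, t \in s -> (absz t.2.2 <= N)%N) ->
  \sum_(t <- s) cst t.1 * mono t.2 = xs N (cf s).
Proof.
move=> hs; rewrite -regroup //; apply: eq_bigr => t _.
by rewrite /mono mulrA.
Qed.

Lemma cf_out s N l : (forall t, t \in s -> (absz t.2.2 <= N)%N) -> (N < absz l)%N ->
  cf s l = 0.
Proof. exact: coef_out. Qed.
Section Main.
Variables (k : int) (m1 m2 : nat).
Hypothesis hk : k != 0.

Definition VV := nseq m1 e2 ++ nseq m2 (lneg e2).
Definition uu := 1 + x1 ^ k.
Definition r2 := 1 + x1 ^ (- k).

Lemma uu_ne0 : uu != 0. Proof. exact: u_neq0. Qed.
Lemma r2_ne0 : r2 != 0. Proof. by apply: u_neq0; rewrite oppr_eq0. Qed.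
Lemma uuV_ne0 : uu^-1 != 0. Proof. by rewrite invr_eq0 uu_ne0. Qed.
Lemma isC_uu : isC uu. Proof. exact: isC_u. Qed.
Lemma isC_uuV : isC uu^-1. Proof. exact: (isCV _ isC_uu). Qed.
Lemma isC_r2 : isC r2. Proof. exact: isC_u. Qed.
Lemma r2E : r2 = x1 ^ (- k) * uu.
Proof.
rewrite /r2 /uu mulrDr mulr1 -expfzDr ?x1_neq0 // addNr expr0z.
by rewrite addrC.
Qed.

Lemma eqxx_lat (x : lat) : (x == x :> (int * int)%type) = true.
Proof. exact: eqxx. Qed.

Lemma multV v : mult_of VV v = if v == e2 then m1 else if v == lneg e2 then m2 else 0%N.
Proof.
rewrite /mult_of /VV count_cat !count_nseq /=.
have hne : (lneg e2 == e2) = false by [].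
case: (eqVneq v e2) => [->|h1].
  case: eqP => [h|_]; last by rewrite mul1n mul0n addn0.
  by move: h; rewrite /lneg /e2; case.
rewrite mul0n add0n.
by case: (eqVneq v (lneg e2)) => _; rewrite ?mul1n ?mul0n.
Qed.

Lemma U_char W : upper_bound k (mult_of VV) W <->
  [/\ laurent W, exists g, laurent g /\ W = iter m1 (Phi uu^-1) g
     & exists h, laurent h /\ W = iter m2 (Phi r2) h].
Proof.
split.
  move=> [hW hv]; split => //.
    have [g [hg e]] := hv e2; exists g; split => //.
    by rewrite e multV eqxx; apply: eq_iter => f; rewrite mu_e2.
  have [g [hg e]] := hv (lneg e2); exists g; split => //.
  rewrite e multV.
  have hne : (lneg e2 == e2) = false by [].
  by rewrite hne eqxx; apply: eq_iter => f; rewrite mu_ne2.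
move=> [hW [g [hg eg]] [h [hh eh]]]; split => // v.
rewrite multV; case: (eqVneq v e2) => [->|h1].
  by exists g; split => //; rewrite eg; apply: eq_iter => f; rewrite mu_e2.
case: (eqVneq v (lneg e2)) => [->|h2].
  by exists h; split => //; rewrite eh; apply: eq_iter => f; rewrite mu_ne2.
by exists W.
Qed.

Definition P1 (W : K) := exists (N : nat) (c : int -> K),
  (forall l, laurent1 (c l)) /\
  (forall l : int, l <= 0 ->
     exists d, laurent1 d /\ c l = (1 + x1 ^ k) ^ (- (m1%:Z * l)) * d) /\
  (forall l : int, 0 <= l ->
     exists d, laurent1 d /\ c l = (1 + x1 ^ k) ^ (m2%:Z * l) * d) /\
  W = xs N c.

Lemma isC_cf s l : (forall t, t \in s -> Qcyc t.1) -> isC (cf s l).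
Proof. by move=> hs; apply: laurent1_isC; apply: laurent1_cf. Qed.

Lemma part1_fwd W : upper_bound k (mult_of VV) W -> P1 W.
Proof.
move/U_char => [[s [hs eW]] [g [[sg [hsg eg]] hW1]] [h [[sh [hsh eh]] hW2]]].
set N := \max_(t <- s ++ sg ++ sh) absz t.2.2.
have hb : forall t, t \in s ++ sg ++ sh -> (absz t.2.2 <= N)%N.
  by move=> t ht; rewrite /N; apply: (@leq_bigmax_seq _ _ predT (fun t : algC * lat => absz t.2.2) t ht isT).
have hbs : forall t, t \in s -> (absz t.2.2 <= N)%N.
  by move=> t ht; apply: hb; rewrite mem_cat ht.
have hbg : forall t, t \in sg -> (absz t.2.2 <= N)%N.
  by move=> t ht; apply: hb; rewrite !mem_cat ht orbT.
have hbh : forall t, t \in sh -> (absz t.2.2 <= N)%N.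
  by move=> t ht; apply: hb; rewrite !mem_cat ht !orbT.
have e1 : forall l, cf s l = cf sg l * uu^-1 ^ (m1%:Z * l).
  have E : xs N (cf s) = xs N (fun l => cf sg l * uu^-1 ^ (m1%:Z * l)).
    rewrite -(laurent_xs _ _ hbs) -eW hW1 eg (laurent_xs _ _ hbg) iter_xs //.
      exact: isC_uuV.
    exact: uuV_ne0.
    by move=> l; apply: isC_cf.
  move=> l; case: (leqP (absz l) N) => hl.
    apply: (xs_uniq _ _ _ _ _ E) => // l'; first by apply: isC_cf.
    by apply: isCM; [apply: isC_cf | apply: isCXz; exact: isC_uuV].
  by rewrite (cf_out _ _ _ hbs hl) (cf_out _ _ _ hbg hl) mul0r.
have e2' : forall l, cf s l = cf sh l * r2 ^ (m2%:Z * l).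
  have E : xs N (cf s) = xs N (fun l => cf sh l * r2 ^ (m2%:Z * l)).
    rewrite -(laurent_xs _ _ hbs) -eW hW2 eh (laurent_xs _ _ hbh) iter_xs //.
      exact: isC_r2.
    exact: r2_ne0.
    by move=> l; apply: isC_cf.
  move=> l; case: (leqP (absz l) N) => hl.
    apply: (xs_uniq _ _ _ _ _ E) => // l'; first by apply: isC_cf.
    by apply: isCM; [apply: isC_cf | apply: isCXz; exact: isC_r2].
  by rewrite (cf_out _ _ _ hbs hl) (cf_out _ _ _ hbh hl) mul0r.
exists N, (cf s); split; first by move=> l; apply: laurent1_cf.
split.
  move=> l _; exists (cf sg l); split; first by apply: laurent1_cf.
  by rewrite e1 exprz_inv mulrC.
split.
  move=> l _; exists (cf sh l * x1 ^ (- k * (m2%:Z * l))); split.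
    by apply: laurent1M; [apply: laurent1_cf | apply: laurent1_x1z].
  by rewrite e2' r2E expfzMl exprz_exp (mulrA (cf sh l)) [LHS]mulrC.
by rewrite eW (laurent_xs _ _ hbs).
Qed.

Lemma part1_bwd W : P1 W -> upper_bound k (mult_of VV) W.
Proof.
move=> [N [c [hc [hneg [hpos ->]]]]].
have isCc : forall l, isC (c l) by move=> l; apply: laurent1_isC.
apply/U_char; split.
- rewrite /xs; apply: laurent_sum => i _.
  by apply: laurentM; [apply: laurent_of1 | apply: laurent_x2z].
- exists (xs N (fun l => c l * uu ^ (m1%:Z * l))); split.
    rewrite /xs; apply: laurent_sum => i _.
    apply: laurentM; last by apply: laurent_x2z.
    apply: laurent_of1; set l := (i%:Z - N%:Z).
    case: (lerP l 0) => hl.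
      have [d [hd ->]] := hneg l hl.
      have := expz_cancel uu (- (m1%:Z * l)) uu_ne0; rewrite opprK => hc1.
      by rewrite mulrAC hc1 mul1r.
    apply: laurent1M => //; apply: laurent1_Xz; first exact: laurent1_u.
    by rewrite mulr_ge0 // ltW.
  rewrite iter_xs; first last.
  + by move=> l; apply: isCM => //; apply: isCXz; exact: isC_uu.
  + exact: uuV_ne0.
  + exact: isC_uuV.
  apply: xs_ext => l; rewrite exprz_inv -mulrA expz_cancel ?mulr1 //.
  exact: uu_ne0.
- exists (xs N (fun l => c l * r2 ^ (- (m2%:Z * l)))); split.
    rewrite /xs; apply: laurent_sum => i _.
    apply: laurentM; last by apply: laurent_x2z.
    apply: laurent_of1; set l := (i%:Z - N%:Z).
    case: (lerP 0 l) => hl.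
      have [d [hd ->]] := hpos l hl.
      rewrite r2E expfzMl mulrA mulrAC [uu ^ _ * d * _]mulrAC expz_cancel ?mul1r.
        by apply: laurent1M => //; rewrite exprz_exp; apply: laurent1_x1z.
      exact: uu_ne0.
    apply: laurent1M => //; apply: laurent1_Xz; first exact: laurent1_u.
    by rewrite oppr_ge0 mulr_ge0_le0 // ltW.
  rewrite iter_xs; first last.
  + by move=> l; apply: isCM => //; apply: isCXz; exact: isC_r2.
  + exact: r2_ne0.
  + exact: isC_r2.
  apply: xs_ext => l.
  have := expz_cancel r2 (- (m2%:Z * l)) r2_ne0; rewrite opprK => hc1.
  by rewrite -mulrA hc1 mulr1.
Qed.


Lemma U_add W1 W2 : upper_bound k (mult_of VV) W1 -> upper_bound k (mult_of VV) W2 ->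
  upper_bound k (mult_of VV) (W1 + W2).
Proof.
move=> /U_char [h1 [g1 [hg1 e1]] [h1' [hh1 e1']]] /U_char [h2 [g2 [hg2 e2]] [h2' [hh2 e2']]].
apply/U_char; split; first by apply: laurentD.
  exists (g1 + g2); split; first by apply: laurentD.
  by rewrite e1 e2 iterD //; [exact: isC_uuV | exact: uuV_ne0].
exists (h1' + h2'); split; first by apply: laurentD.
by rewrite e1' e2' iterD //; [exact: isC_r2 | exact: r2_ne0].
Qed.

Lemma U_mul W1 W2 : upper_bound k (mult_of VV) W1 -> upper_bound k (mult_of VV) W2 ->
  upper_bound k (mult_of VV) (W1 * W2).
Proof.
move=> /U_char [h1 [g1 [hg1 e1]] [h1' [hh1 e1']]] /U_char [h2 [g2 [hg2 e2]] [h2' [hh2 e2']]].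
apply/U_char; split; first by apply: laurentM.
  exists (g1 * g2); split; first by apply: laurentM.
  by rewrite e1 e2 iterM //; [exact: isC_uuV | exact: uuV_ne0].
exists (h1' * h2'); split; first by apply: laurentM.
by rewrite e1' e2' iterM //; [exact: isC_r2 | exact: r2_ne0].
Qed.

Lemma U_single a (b : int) : laurent1 a ->
  (b <= 0 -> exists d, laurent1 d /\ a = (1 + x1 ^ k) ^ (- (m1%:Z * b)) * d) ->
  (0 <= b -> exists d, laurent1 d /\ a = (1 + x1 ^ k) ^ (m2%:Z * b) * d) ->
  upper_bound k (mult_of VV) (a * x2 ^ b).
Proof.
move=> ha hn hp; apply: part1_bwd.
exists (absz b), (fun l => if l == b then a else 0); split.
  by move=> l; case: eqP => _ //; exact: laurent1_0.
split.
  move=> l hl; case: eqP => [e|_]; first by subst l; exact: hn.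
  by exists 0; rewrite mulr0; split => //; exact: laurent1_0.
split.
  move=> l hl; case: eqP => [e|_]; first by subst l; exact: hp.
  by exists 0; rewrite mulr0; split => //; exact: laurent1_0.
by rewrite xs_single.
Qed.

Lemma part2_bwd W :
  Qsubalg_gen [:: x1; x1^-1; x2 * (1 + x1 ^ k) ^+ m2; (1 + x1 ^ k) ^+ m1 / x2] W ->
  upper_bound k (mult_of VV) W.
Proof.
move=> hW; apply: hW; last first.
- exact: U_mul.
- exact: U_add.
- move=> g; rewrite !inE => /or4P [] /eqP ->.
  + rewrite -[x1]mulr1 -(expr0z x2) -[X in X * _]expr1z.
    apply: U_single; first exact: laurent1_x1z.
      by move=> _; exists (x1 ^ 1); split; [exact: laurent1_x1z | rewrite mulr0 oppr0 expr0z mul1r].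
    by move=> _; exists (x1 ^ 1); split; [exact: laurent1_x1z | rewrite mulr0 expr0z mul1r].
  + rewrite -[x1^-1]mulr1 -(expr0z x2) -exprN1.
    apply: U_single; first exact: laurent1_x1z.
      by move=> _; exists (x1 ^ (-1)); split; [exact: laurent1_x1z | rewrite mulr0 oppr0 expr0z mul1r].
    by move=> _; exists (x1 ^ (-1)); split; [exact: laurent1_x1z | rewrite mulr0 expr0z mul1r].
  + rewrite mulrC -[x2]expr1z.
    apply: U_single; first by apply: laurent1Xn; exact: laurent1_u.
      by move=> h; exfalso; move: h; rewrite ler10.
    by move=> _; exists 1; split; [exact: laurent1_1 | rewrite mulr1 mulr1].
  + rewrite -exprN1.
    apply: U_single; first by apply: laurent1Xn; exact: laurent1_u.
      by move=> _; exists 1; split; [exact: laurent1_1 | rewrite mulr1 mulrN1 opprK].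
    by move=> h; exfalso; move: h; rewrite oppr_ge0 ler10.
- move=> c hc; rewrite -[cst c]mulr1 -(expr0z x2).
  apply: U_single; first exact: laurent1_cst.
    by move=> _; exists (cst c); split; [exact: laurent1_cst | rewrite mulr0 oppr0 expr0z mul1r].
  by move=> _; exists (cst c); split; [exact: laurent1_cst | rewrite mulr0 expr0z mul1r].
Qed.

Lemma part2_fwd W : upper_bound k (mult_of VV) W ->
  Qsubalg_gen [:: x1; x1^-1; x2 * (1 + x1 ^ k) ^+ m2; (1 + x1 ^ k) ^+ m1 / x2] W.
Proof.
move/part1_fwd => [N [c [hc [hneg [hpos ->]]]]].
move=> S hS hg hD hM.
have S0 : S 0 by rewrite -cst0; apply: hS; exact: Qcyc0.
have S1 : S 1 by rewrite -cst1; apply: hS; exact: Qcyc1.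
have SXn : forall f n, S f -> S (f ^+ n).
  by move=> f n hf; elim: n => [|n ih]; [rewrite expr0 | rewrite exprS; apply: hM].
have Sx1 : S x1 by apply: hg; exact: mem_head.
have Sx1V : S x1^-1 by apply: hg; apply: mem_behead; exact: mem_head.
have G3 : S (x2 * (1 + x1 ^ k) ^+ m2) by apply: hg; do 2 apply: mem_behead; exact: mem_head.
have G4 : S ((1 + x1 ^ k) ^+ m1 / x2) by apply: hg; do 3 apply: mem_behead; exact: mem_head.
have Sx1z : forall a : int, S (x1 ^ a).
  case=> n; first by apply: SXn.
  by rewrite NegzE -exprnN -exprVn; apply: SXn.
have SL : forall d, laurent1 d -> S d.
  move=> d [s [hs ->]]; elim: s hs => [|t s ih] hs; first by rewrite big_nil.
  rewrite big_cons; apply: hD; last by apply: ih => t' ht'; apply: hs; rewrite inE ht' orbT.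
  by apply: hM; [apply: hS; apply: hs; rewrite inE eqxx | apply: Sx1z].
rewrite /xs; apply: (big_ind S) => // i _.
set l := (i%:Z - N%:Z).
case: (lerP 0 l) => hl.
  have [d [hd ->]] := hpos l hl.
  have [n en] : exists n : nat, l = n%:Z by exists (absz l); lia.
  rewrite en -PoszM.
  have -> : (1 + x1 ^ k) ^ ((m2 * n)%N%:Z) * d * x2 ^ (n%:Z) =
            d * (x2 * (1 + x1 ^ k) ^+ m2) ^+ n.
    rewrite -!exprnP exprMn -exprM mulnC.
    by rewrite [d * _]mulrC [LHS]mulrAC [x2 ^+ n * _]mulrC.
  by apply: hM; [apply: SL | apply: SXn].
have [d [hd ->]] := hneg l (ltW hl).
have [n en] : exists n : nat, l = - n%:Z by exists (absz l); lia.
rewrite en mulrN opprK -PoszM.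
have -> : (1 + x1 ^ k) ^ ((m1 * n)%N%:Z) * d * x2 ^ (- n%:Z) =
          d * ((1 + x1 ^ k) ^+ m1 / x2) ^+ n.
  rewrite -exprnN -!exprnP expr_div_n -exprM mulnC.
  by rewrite [d * _]mulrC [LHS]mulrAC.
by apply: hM; [apply: SL | apply: SXn].
Qed.
End Main.

Theorem proposition3p6 (k : int) (m1 m2 : nat) (hk : k != 0) :
  let V := nseq m1 e2 ++ nseq m2 (lneg e2) in
  let U := upper_bound k (mult_of V) in
  (forall W : K, U W <->
     exists (N : nat) (c : int -> K),
       (forall l, laurent1 (c l)) /\
       (forall l : int, l <= 0 ->
          exists d, laurent1 d /\ c l = (1 + x1 ^ k) ^ (- (m1%:Z * l)) * d) /\
       (forall l : int, 0 <= l ->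
          exists d, laurent1 d /\ c l = (1 + x1 ^ k) ^ (m2%:Z * l) * d) /\
       W = \sum_(i < (2 * N).+1) c (i%:Z - N%:Z) * x2 ^ (i%:Z - N%:Z)) /\
  (forall W : K, U W <->
     Qsubalg_gen [:: x1; x1^-1; x2 * (1 + x1 ^ k) ^+ m2;
                     (1 + x1 ^ k) ^+ m1 / x2] W).
Proof.
move=> V U; split => W; split.
- exact: (@part1_fwd k m1 m2 hk W).
- exact: (@part1_bwd k m1 m2 hk W).
- exact: (@part2_fwd k m1 m2 hk W).
- exact: (@part2_bwd k m1 m2 hk W).
Qed.
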